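(* Let $D$ be a locatable digraph of order $n$. Then $\gamma_{OL}(D)=n$ if and only if $D$ can be constructed as follows. (1) Choose vertex-disjoint directed cycles $C_1,\dots,C_k$ (of orders $n_1+\dots+n_k=n$, loops and 2-cycles allowed) covering $V(D)$; these will be exactly the forcing arcs of $D$. For each vertex $v$, let $f^-(v)$ and $f^+(v)$ be the predecessor and successor of $v$ on its cycle. (2) Choose a partition $V(D)=V_d\cup V_l$ (the domination-forced and the location-forced vertices, respectively). (3) Construct a digraph $\mathcal{H}$ on $V(D)$ which is a disjoint union of vertex-disjoint rooted directed trees, such that the roots of the trees are precisely the vertices $f^+(x)$ with $x\in V_d$, and for every $x\in V_l$, the vertex $f^+(x)$ has an in-neighbour in $\mathcal{H}$. (4) The arc set of $D$ consists of the arcs of $C_1,\dots,C_k$ together with, for each tree $T$ of $\mathcal{H}$ and each vertex $v$ of $T$, an arc from $f^-(v)$ to every descendant of $v$ in $T$.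
   Context: Digraphs are finite and may contain loops; between two distinct vertices there may be arcs in one or both directions, no repeated arcs. $N^-(v)=\{u: uv\text{ is an arc}\}$ (contains $v$ iff $v$ has a loop). An OLD set of $D$ is a set $S\subseteq V(D)$ such that every vertex has an in-neighbour in $S$ and for every two distinct vertices $u,w$ some vertex of $S$ lies in exactly one of $N^-(u),N^-(w)$. $D$ is locatable if it has an OLD set, and then $\gamma_{OL}(D)$ is the minimum size of an OLD set. A vertex $v$ is domination-forced if some vertex $w$ has $N^-(w)=\{v\}$; location-forced if there are distinct vertices $x,y$ with $N^-(x)\ominus N^-(y)=\{v\}$. An arc $xy$ is forcing if $N^-(y)=\{x\}$ or there is a vertex $z$ with $N^-(z)=N^-(y)\setminus\{x\}$. A rooted directed tree is a digraph without loops and directed 2-cycles whose underlying undirected graph is a tree, with a single source (the root) and all arcs oriented away from the root; a single vertex is allowed. The descendants of $v$ in $T$ are the vertices reachable from $v$ by a directed path in $T$. *)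

(* Defs.v *)
(* A digraph on a finite vertex type V is given by its arc
   relation a : rel V (a u v <-> uv is an arc; loops allowed). *)
From mathcomp Require Import all_boot.
From mathcomp Require Import fingroup perm.
Set Implicit Arguments. Unset Strict Implicit. Unset Printing Implicit Defensive.

Section Digraphs.
Variable V : finType.

Definition in_nbhd (a : rel V) (v : V) : {set V} := [set u | a u v].

Definition is_OLD (a : rel V) (S : {set V}) : bool :=
  [forall v, exists u in S, u \in in_nbhd a v] &&
  [forall u, forall w, (u != w) ==>
     [exists s in S, (s \in in_nbhd a u) != (s \in in_nbhd a w)]].

Definition locatable (a : rel V) : Prop := exists S, is_OLD a S.

(* minimum size of an OLD set (the default #|V| is never smaller than any
   candidate, so for locatable digraphs this is the true minimum) *)
Definition gamma_OL (a : rel V) : nat :=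
  \big[minn/#|V|]_(S : {set V} | is_OLD a S) #|S|.

(* h is a vertex-disjoint union of rooted directed trees spanning V:
   every vertex has at most one in-neighbour and there is no directed cycle
   (in particular no loops or 2-cycles). *)
Definition rooted_forest (h : rel V) : Prop :=
  (forall v, #|in_nbhd h v| <= 1) /\
  (forall u v, h u v -> ~~ connect h v u).

Definition is_root (h : rel V) (v : V) : bool := in_nbhd h v == set0.

Definition descendant (h : rel V) (v w : V) : bool := connect h v w.

End Digraphs.

(* Main.v *)
Require Import Defs.
From mathcomp Require Import all_boot.
From mathcomp Require Import fingroup perm.
From mathcomp Require Import all_boot fingroup perm.
Set Implicit Arguments. Unset Strict Implicit. Unset Printing Implicit Defensive.
Section C.
Variable V : finType.
Definition symd (A B : {set V}) := (A :\: B) :|: (B :\: A).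
Definition forcedF (F : {set {set V}}) (X : {set V}) :=
  forall x, x \in X -> exists A B, [/\ A \in F, B \in F & symd A B = [set x]].

Lemma symdD1 A B x : symd (A :\ x) (B :\ x) = symd A B :\ x.
Proof. by apply/setP => z; rewrite !inE; case: (z == x); case: (z \in A); case: (z \in B). Qed.

Lemma count_lem k (X : {set V}) (F : {set {set V}}) : #|X| = k -> forcedF F X ->
  #|X| + #|[set A :\: X | A in F]| <= #|F|.
Proof.
elim: k X F => [|k IH] X F HX HF.
  by rewrite HX (cards0_eq HX) add0n; exact: leq_imset_card.
have /set0Pn [x xX] : X != set0 by apply/negP => /eqP X0; rewrite X0 cards0 in HX.
pose F1 := [set A :\ x | A in F].
have HF1 : forcedF F1 (X :\ x).
  move=> y; rewrite !inE => /andP [yx yX].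
  have [A [B [AF BF AB]]] := HF y yX.
  exists (A :\ x), (B :\ x); split; try exact: imset_f.
  rewrite symdD1 AB; apply/setP => z; rewrite !inE.
  by case: (eqVneq z y) => [->|]; rewrite ?yx ?andbF.
have lt1 : #|F1| < #|F|.
  have [A [B [AF BF AB]]] := HF x xX.
  rewrite ltn_neqAle leq_imset_card andbT; apply/negP => /imset_injP inj.
  have AB' : A :\ x = B :\ x.
    apply/setP => z; rewrite !inE; case: (eqVneq z x) => //= zx.
    have : z \notin symd A B by rewrite AB inE zx.
    by rewrite !inE; case: (z \in A); case: (z \in B).
  have := inj _ _ AF BF AB'; move=> eAB; move: AB; rewrite eAB.
  move/setP/(_ x); rewrite !inE eqxx; by case: (x \in B).
have HX1 : #|X :\ x| = k by move: HX; rewrite (cardsD1 x X) xX add1n => [[]].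
have := IH _ _ HX1 HF1.
have -> : [set A :\: (X :\ x) | A in F1] = [set A :\: X | A in F].
  rewrite -imset_comp; apply: eq_imset => A /=; apply/setP => z; rewrite !inE.
  by case: (eqVneq z x) => [->|]; rewrite ?xX //= ?andbF.
move=> H; rewrite (cardsD1 x X) xX add1n addSn; exact: leq_ltn_trans H lt1.
Qed.

Lemma bigmin_le (I : eqType) (r : seq I) (P : pred I) (F : I -> nat) d j :
  j \in r -> P j -> \big[minn/d]_(i <- r | P i) F i <= F j.
Proof.
elim: r => [//|i r IH]; rewrite inE big_cons => /orP [/eqP <- -> | jr Pj].
  exact: geq_minl.
case: (P i); last exact: IH.
exact: leq_trans (geq_minr _ _) (IH jr Pj).
Qed.

Lemma card4 (x y : V) : x != y -> #|set0 |: ([set x] |: ([set y] |: [set [set x; y]]))| = 4.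
Proof.
move=> xy. rewrite !cardsU1 cards1 !inE.
have n1 : forall (A B : {set V}) z, z \in A -> z \notin B -> (B == A) = false.
  by move=> A B z zA zB; apply/negP => /eqP E; move: zB; rewrite E zA.
have yx : y != x by rewrite eq_sym.
rewrite (n1 [set x] set0 x) ?(n1 [set y] set0 y) ?(n1 [set x; y] set0 x)
  ?(n1 [set y] [set x] y) ?(n1 [set x;y] [set x] y) ?(n1 [set x;y] [set y] x) ?inE ?eqxx ?orbT ?(negPf xy) ?(negPf yx) //.
Qed.

Lemma conn_mono (e : rel V) (m : V -> nat) :
  (forall u v, e u v -> m u <= m v) -> forall u v, connect e u v -> m u <= m v.
Proof.
move=> H u v /connectP [p]; elim: p u => [|y p IH] u /=; first by move=> _ ->.
by case/andP => euy py vE; apply: leq_trans (H _ _ euy) (IH _ py vE).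
Qed.

Lemma conn_last (e : rel V) v w : connect e v w ->
  v = w \/ exists2 u, connect e v u & e u w.
Proof.
move=> /connectP [p]; case/lastP: p => [|q z] /=; first by move=> _ ->; left.
rewrite rcons_path last_rcons => /andP [pq ez] ->; right.
exists (last v q) => //; apply/connectP; by exists q.
Qed.

Variable a : rel V.
Notation N := (in_nbhd a).
Definition Fam : {set {set V}} := set0 |: (N @: setT).

Lemma inN u w : (u \in N w) = a u w.
Proof. by rewrite inE. Qed.

Lemma NFam w : N w \in Fam.
Proof. by apply/setU1P; right; apply: imset_f. Qed.

Section Fwd.
Variable S0 : {set V}.
Hypothesis HS0 : is_OLD a S0.
Hypothesis gam : gamma_OL a = #|V|.

Lemma Ninj : injective N.
Proof.
move=> u w E; apply/eqP; apply/negP => /negP uw.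
move: HS0 => /andP [_ /forallP H2]; move: (H2 u) => /forallP /(_ w).
rewrite uw /= => /existsP [s /andP [_]]; by rewrite E eqxx.
Qed.

Lemma Nne v : N v != set0.
Proof.
move: HS0 => /andP [/forallP H1 _]; have /existsP [u /andP [_ uv]] := H1 v.
by apply/set0Pn; exists u.
Qed.

Lemma forced x : exists A B, [/\ A \in Fam, B \in Fam & symd A B = [set x]].
Proof.
have notOLD : ~~ is_OLD a (setT :\ x).
  apply/negP => O.
  have := bigmin_le (fun S : {set V} => #|S|) #|V| (mem_index_enum (setT :\ x)) O.
  rewrite -[X in X <= _]/(gamma_OL a) gam.
  have := cardsD1 x [set: V]; rewrite cardsT inE => ->; by rewrite add1n ltnn.
rewrite negb_and in notOLD; case/orP: notOLD.
  move/forallPn => [v /existsPn Hv].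
  have Nv : N v = [set x].
    have [u uv] := set0Pn _ (Nne v).
    have ux : u = x.
      by apply/eqP; move: (Hv u); rewrite uv andbT !inE andbT negbK.
    apply/setP => z; rewrite !inE; case: (eqVneq z x) => [->|zx]; first by rewrite -ux -inN.
    by move: (Hv z); rewrite !inE zx /= => /negPf.
  exists set0, (N v); split; [exact: setU11 | exact: NFam |].
  by rewrite -Nv; apply/setP => z; rewrite !inE /= andbF.
move/forallPn => [u /forallPn [w]]; rewrite negb_imply => /andP [uw /existsPn Hs].
have Ex : (x \in N u) != (x \in N w).
  apply/negP => /eqP Ex; move/negP: uw; apply; apply/eqP; apply: Ninj; apply/setP => z.
  case: (eqVneq z x) => [->//|zx].
  by move: (Hs z); rewrite !in_setD1 zx in_setT /= negbK => /eqP.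
exists (N u), (N w); split; [exact: NFam | exact: NFam |].
apply/setP => z; rewrite !inE; case: (eqVneq z x) => [->|zx].
  by move: Ex; rewrite !inE; case: (a x u); case: (a x w).
by move: (Hs z); rewrite !inE zx /=; case: (a z u); case: (a z w).
Qed.

Lemma core_aux x A B : A \in Fam -> B \in Fam -> symd A B = [set x] -> x \in B ->
  exists w, (x \in N w) && (N w :\ x \in Fam).
Proof.
move=> AF BF AB xB.
have : B != set0 by apply/set0Pn; exists x.
move: BF; rewrite in_setU1 => /orP [/eqP -> | /imsetP [w _ BE] _]; first by rewrite eqxx.
subst B; exists w; rewrite xB /=.
have -> : N w :\ x = A => //.
apply/setP => z; rewrite in_setD1; case: (eqVneq z x) => [->|zx] /=.
  by move/setP: AB => /(_ x); rewrite /symd !in_setU !in_setD xB in_set1 eqxx; case: (x \in A).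
by move/setP: AB => /(_ z); rewrite /symd !in_setU !in_setD in_set1 (negPf zx); case: (z \in A); case: (z \in N w).
Qed.

Lemma core x : exists w, (x \in N w) && (N w :\ x \in Fam).
Proof.
have [A [B [AF BF AB]]] := forced x.
have : x \in symd A B by rewrite AB set11.
rewrite !inE => /orP [/andP [_ xA] | /andP [_ xB]].
  have AB' : symd B A = [set x] by rewrite /symd setUC.
  exact: (core_aux BF AF AB' xA).
exact: (core_aux AF BF).
Qed.

Definition g x := xchoose (core x).
Lemma gP x : (x \in N (g x)) && (N (g x) :\ x \in Fam).
Proof. exact: (xchooseP (core x)). Qed.

Lemma cardFam : #|Fam| = #|V|.+1.
Proof.
rewrite cardsU1 card_imset ?cardsT; last exact: Ninj.
have -> : set0 \notin N @: setT.
  by apply/imsetP => [[w _ E]]; move: (Nne w); rewrite -E eqxx.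
done.
Qed.

Lemma g_inj : injective g.
Proof.
move=> x y gxy; apply/eqP; apply/negP => /negP xy.
move: (gP x) (gP y); rewrite -gxy; set C := N (g x).
move=> /andP [xC Cx] /andP [yC Cy].
pose X := ~: [set x; y].
have HF : forcedF Fam X by move=> z _; exact: forced z.
have := count_lem (erefl _) HF.
have := cardsC [set x; y]; rewrite cards2 xy cardFam -/X => HX.
have sub : set0 |: ([set x] |: ([set y] |: [set [set x; y]])) \subset [set A :\: X | A in Fam].
  apply/subsetP => S; rewrite !inE => /or4P [] /eqP ->.
  - apply/imsetP; exists set0; first exact: setU11.
    by rewrite set0D.
  - apply/imsetP; exists (C :\ y) => //.
    apply/setP => z; rewrite in_set1 in_setD in_setC in_set2 negbK in_setD1.
    case: (eqVneq z x) => [->|zx]; first by rewrite ?eqxx /= xy xC.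
    by case: (eqVneq z y).
  - apply/imsetP; exists (C :\ x) => //.
    apply/setP => z; rewrite in_set1 in_setD in_setC in_set2 negbK in_setD1.
    case: (eqVneq z y) => [->|zy]; first by rewrite ?eqxx orbT /= eq_sym xy yC.
    by case: (eqVneq z x).
  - apply/imsetP; exists C; first exact: NFam.
    apply/setP => z; rewrite in_setD in_setC negbK.
    case: (eqVneq z x) => [->|zx]; first by rewrite in_set2 ?eqxx /= xC.
    by case: (eqVneq z y) => [->|zy]; rewrite in_set2 ?eqxx ?orbT ?yC // (negPf zx) (negPf zy).
have := subset_leq_card sub; rewrite card4 // => H4 H.
have : #|X| + 4 <= #|V|.+1 by apply: leq_trans H; rewrite leq_add2l.
by rewrite -HX addnC addSn addSn ltnS add2n ltnn.
Qed.

Definition f : {perm V} := perm g_inj.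

Lemma fP w : ((f^-1)%g w \in N w) && (N w :\ (f^-1)%g w \in Fam).
Proof.
have E : g ((f^-1)%g w) = w by rewrite /f -(permE g_inj) permKV.
by have := gP ((f^-1)%g w); rewrite E.
Qed.

Definition h : rel V := [rel u w | N u == N w :\ (f^-1)%g w].
Definition Vd : {set V} := [set x | N (f x) :\ x == set0].

Lemma parent w : N w :\ (f^-1)%g w != set0 -> exists u, h u w.
Proof.
move=> ne; have /andP [_] := fP w; rewrite in_setU1 (negPf ne) /=.
by move/imsetP => [u _ E]; exists u; rewrite /h /= E.
Qed.

Lemma rootE r : is_root h r = (N r :\ (f^-1)%g r == set0).
Proof.
apply/idP/idP => [R|/eqP E].
  apply/negP => /negP /parent [u hu].
  by move: R => /eqP /setP /(_ u); rewrite !inE hu.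
apply/eqP/setP => u; rewrite !inE /h /= E.
by apply/negP => /eqP N0; move: (Nne u); rewrite N0 eqxx.
Qed.

Lemma hlt u v : h u v -> #|N u| < #|N v|.
Proof.
rewrite /= => /eqP ->; have /andP [fv _] := fP v.
by rewrite [X in _ < X](cardsD1 ((f^-1)%g v)) fv.
Qed.

Lemma key k w : #|N w| <= k -> forall u,
  u \in N w <-> exists v, u = (f^-1)%g v /\ connect h v w.
Proof.
elim: k w => [|k IH] w Hw u.
  by move: Hw; rewrite leqn0 => /eqP /cards0_eq E; move: (Nne w); rewrite E eqxx.
split.
  move=> uw; case: (eqVneq u ((f^-1)%g w)) => [->|uf].
    by exists w; split => //; exact: connect0.
  have ne : N w :\ (f^-1)%g w != set0 by apply/set0Pn; exists u; rewrite in_setD1 uf uw.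
  have [p hp] := parent ne.
  have lt := hlt hp.
  have Hp : #|N p| <= k by rewrite -ltnS (leq_trans lt Hw).
  have up : u \in N p by move: (hp); rewrite /h /= => /eqP ->; rewrite in_setD1 uf uw.
  have [v [uv cv]] := (IH p Hp u).1 up.
  by exists v; split => //; exact: connect_trans cv (connect1 hp).
move=> [v [uv cv]]; case: (conn_last cv) => [vw|[p cp hp]].
  by rewrite uv vw; case/andP: (fP w).
have lt := hlt hp.
have Hp : #|N p| <= k by rewrite -ltnS (leq_trans lt Hw).
have := (IH p Hp u).2 (ex_intro _ v (conj uv cp)).
by move: hp; rewrite /h /= => /eqP ->; rewrite in_setD1 => /andP [_ ->].
Qed.
End Fwd.

Lemma fwd S0 (HS0 : is_OLD a S0) (gam : gamma_OL a = #|V|) :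
  exists (f : {perm V}) (Vd : {set V}) (h : rel V),
    [/\ rooted_forest h,
        (forall r, is_root h r <-> exists2 x, x \in Vd & r = f x),
        (forall x, x \notin Vd -> ~~ is_root h (f x)) &
        (forall u w, a u w <->
           (w = f u \/ exists v, u = (f^-1)%g v /\ descendant h v w))].
Proof.
exists (f HS0 gam), (Vd HS0 gam), (h HS0 gam); split.
- split.
    move=> v; apply/card_le1_eqP => u1 u2; rewrite !inE /h /= => /eqP E1 /eqP E2.
    by apply: (Ninj HS0); rewrite E1 E2.
  move=> u v huv; apply/negP => cvu.
  have := conn_mono (m := fun x => #|N x|) (fun u v H => ltnW (hlt H)) cvu.
  by rewrite leqNgt (hlt huv).
- move=> r; rewrite (rootE HS0 gam); split.
    move=> E; exists ((f HS0 gam)^-1 r)%g; last by rewrite permKV.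
    by rewrite inE permKV.
  by move=> [x xV ->]; move: xV; rewrite inE permK.
- by move=> x; rewrite (rootE HS0 gam) permK inE.
- move=> u w; rewrite -inN; split.
    by move/(key HS0 gam (leqnn _)) => ?; right.
  case => [->|H]; last exact: (key HS0 gam (leqnn _) u).2 H.
  by have := fP HS0 gam (f HS0 gam u); rewrite permK => /andP [].
Qed.

Lemma rev (f : {perm V}) (h : rel V) :
  rooted_forest h ->
  (forall u w, a u w <-> (w = f u \/ exists v, u = (f^-1)%g v /\ descendant h v w)) ->
  gamma_OL a = #|V|.
Proof.
move=> [F1 F2] arcs.
have arcs' : forall u w, a u w <-> exists v, u = (f^-1)%g v /\ connect h v w.
  move=> u w; split.
    case/arcs => [E|//]; exists w; split; [by rewrite E permK | exact: connect0].
  by move=> H; apply/arcs; right.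
have allS : forall S, is_OLD a S -> forall x, x \in S.
  move=> S /andP [/forallP H1 /forallP H2] x.
  case R: (is_root h (f x)).
    have /existsP [u /andP [uS ufx]] := H1 (f x).
    rewrite inN in ufx; have [v [uv cv]] := (arcs' _ _).1 ufx.
    case: (conn_last cv) => [vf | [p _ hp]].
      by rewrite uv vf permK in uS.
    by move: R; rewrite /is_root => /eqP/setP/(_ p); rewrite !inE hp.
  move/negbT: R => /set0Pn [p]; rewrite inE => hp.
  have pf : f x != p.
    apply/eqP => E; rewrite -E in hp; have := F2 _ _ hp; by rewrite connect0.
  have /existsP [s /andP [sS ds]] := implyP ((forallP (H2 (f x))) p) pf.
  rewrite !inN in ds.
  case: (eqVneq s x) => [<-//|sx]; exfalso.
  have E1 : a s p -> a s (f x).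
    move/arcs' => [v [sv cv]]; apply/arcs'; exists v; split => //.
    exact: connect_trans cv (connect1 hp).
  have E2 : a s (f x) -> a s p.
    move/arcs' => [v [sv cv]]; case: (conn_last cv) => [vf|[q cq hq]].
      by move: sx; rewrite sv vf permK eqxx.
    have qp : q = p.
      by apply: esym; apply: (card_le1_eqP (F1 (f x))); rewrite inE.
    by apply/arcs'; exists v; rewrite -qp.
  apply: (negP ds); apply/eqP; apply/idP/idP; [exact: E2 | exact: E1].
rewrite /gamma_OL; apply: (big_ind (fun m => m = #|V|)) => //.
  by move=> x y -> ->; exact: minnn.
move=> S O; have -> : S = setT by apply/setP => x; rewrite inE; exact: allS.
exact: cardsT.
Qed.
End C.

Theorem theorem18 (V : finType) (a : rel V) :
  locatable a ->
  gamma_OL a = #|V| <->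
  exists (f : {perm V}) (Vd : {set V}) (h : rel V),
    [/\ rooted_forest h,
        (forall r, is_root h r <-> exists2 x, x \in Vd & r = f x),
        (forall x, x \notin Vd -> ~~ is_root h (f x)) &
        (forall u w, a u w <->
           (w = f u \/ exists v, u = (f^-1)%g v /\ descendant h v w))].
Proof.
move=> [S0 HS0]; split; first exact: fwd HS0.
by move=> [f [Vd [h [F _ _ A]]]]; exact: rev F A.
Qed.
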